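(* Let $N\ge 1$ be an integer and let $a(1),a(2),\dots$ be a sequence of real numbers such that for all integers $n\ge N$, $$a(2n)\le a(n)+a(n)\quad\text{and}\quad a(2n+1)\le a(n)+a(n+1).$$ For $n\ge 1$ let $q(n):=\max\left\{\frac{a(j)}{j}: n\le j\le 2n\right\}$. Then $q(n)\ge q(n+1)$ for all $n\ge N$. *)

(* Defs.v *)
From Stdlib Require Import Reals List.
Open Scope R_scope.

(* The seed value
   a(n)/n is itself an element of the set, so it does not alter the max. *)
Definition q (a : nat -> R) (n : nat) : R :=
  fold_right Rmax (a n / INR n)
    (map (fun j => a j / INR j) (seq n (n + 1))).

(* Main.v *)
Require Import Defs.
From Stdlib Require Import Reals List Lra Lia.
Open Scope R_scope.

Lemma fold_ge (x0 y : R) (l : list R) : In y l -> y <= fold_right Rmax x0 l.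
Proof.
  induction l as [|z l IH]; simpl; [tauto|].
  intros [H|H]; [subst; apply Rmax_l|].
  eapply Rle_trans; [apply IH; exact H| apply Rmax_r].
Qed.

Lemma fold_le (x0 M : R) (l : list R) : x0 <= M -> (forall y, In y l -> y <= M) ->
  fold_right Rmax x0 l <= M.
Proof.
  intros H0 H; induction l as [|z l IH]; simpl; auto.
  apply Rmax_lub; [apply H; left; auto| apply IH; intros; apply H; right; auto].
Qed.

Lemma q_ge (a : nat -> R) n j : (n <= j <= 2*n)%nat -> a j / INR j <= q a n.
Proof.
  intros Hj; unfold q; apply fold_ge.
  apply (in_map (fun j => a j / INR j)); apply in_seq; lia.
Qed.

Lemma q_le (a : nat -> R) n M : (forall j, (n <= j <= 2*n)%nat -> a j / INR j <= M) ->
  q a n <= M.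
Proof.
  intros H; unfold q; apply fold_le; [apply H; lia|].
  intros y Hy; apply in_map_iff in Hy as [j [<- Hj]]; apply in_seq in Hj; apply H; lia.
Qed.

Lemma div_le u d Q : 0 < d -> u <= Q * d -> u / d <= Q.
Proof.
  intros Hd H; unfold Rdiv; apply Rmult_le_reg_r with d; auto.
  rewrite Rmult_assoc, Rinv_l by lra; lra.
Qed.

Lemma le_div u d Q : 0 < d -> u / d <= Q -> u <= Q * d.
Proof.
  intros Hd H; replace u with (u / d * d) by (field; lra).
  apply Rmult_le_compat_r; lra.
Qed.

Theorem lemma3p3 (a : nat -> R) (N : nat) (HN : (1 <= N)%nat)
  (Heven : forall n : nat, (N <= n)%nat -> a (2 * n)%nat <= a n + a n)
  (Hodd : forall n : nat, (N <= n)%nat -> a (2 * n + 1)%nat <= a n + a (n + 1)%nat) :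
  forall n : nat, (N <= n)%nat -> q a n >= q a (n + 1)%nat.
Proof.
  intros n Hn; apply Rle_ge, q_le; intros j Hj.
  assert (Hpos : forall k, (1 <= k)%nat -> 0 < INR k)
    by (intros k Hk; apply lt_0_INR; lia).
  assert (Hn0 := le_div _ _ _ (Hpos n ltac:(lia)) (q_ge a n n ltac:(lia))).
  assert (Hn1 := le_div _ _ _ (Hpos (n+1)%nat ltac:(lia)) (q_ge a n (n+1) ltac:(lia))).
  destruct (Nat.le_gt_cases j (2*n)) as [Hle|Hgt]; [apply q_ge; lia|].
  destruct (Nat.eq_dec j (2*n+1)) as [->|Hne].
  - apply div_le; [apply Hpos; lia|].
    eapply Rle_trans; [apply Hodd; exact Hn|].
    repeat rewrite ?mult_INR, ?plus_INR in *; change (INR 2) with 2 in *; change (INR 1) with 1 in *; lra.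
  - assert (j = 2*(n+1))%nat as -> by lia.
    apply div_le; [apply Hpos; lia|].
    eapply Rle_trans; [apply Heven; lia|].
    repeat rewrite ?mult_INR, ?plus_INR in *; change (INR 2) with 2 in *; change (INR 1) with 1 in *; lra.
Qed.
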